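(* Let $n$ be a positive integer with $n\notin\{4,8,12\}$. Then there does not exist any product design $PD\big(n;\ 1_{(3)};\ 1_{(3)};\ n-3\big)$, i.e. there is no product design $(M_1;M_2;N)$ of order $n$ in which $M_1$ and $M_2$ are each orthogonal designs of type $(1,1,1)$ and $N$ is an orthogonal design of type $(n-3)$.
   Context: An orthogonal design $OD(n;\ c_1,\ldots,c_k)$ is a square matrix $C$ of order $n$ with entries from $\{0,\pm x_1,\ldots,\pm x_k\}$, where $x_1,\ldots,x_k$ are commuting indeterminates, such that $CC^{\rm T}=\big(\sum_{j=1}^k c_jx_j^2\big)I_n$; $(c_1,\ldots,c_k)$ is its type. The notation $u_{(k)}$ in a type means that $u$ is repeated $k$ times. For matrices $A=[a_{ij}]$, $B=[b_{ij}]$ of the same size, the Hadamard product is $A*B=[a_{ij}b_{ij}]$, and $\mathbf 0$ is the zero matrix. A product design $PD\big(n;\ a_1,\ldots,a_r;\ b_1,\ldots,b_s;\ u_1,\ldots,u_t\big)$ is a triple $(M_1;M_2;N)$ where $M_1$, $M_2$, $N$ are orthogonal designs of order $n$ and types $(a_1,\ldots,a_r)$, $(b_1,\ldots,b_s)$, $(u_1,\ldots,u_t)$ respectively, such that (i) $M_1*N=M_2*N=\mathbf 0$; (ii) $M_1+N$ and $M_2+N$ are orthogonal designs; (iii) $M_1M_2^{\rm T}=M_2M_1^{\rm T}$. *)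

(* Defs.v *)
From HB Require Import structures.
From mathcomp Require Import all_boot all_order all_algebra.
Set Implicit Arguments. Unset Strict Implicit. Unset Printing Implicit Defensive.
Import Order.TTheory GRing.Theory Num.Theory.
Local Open Scope ring_scope.

(* A formal entry of a design with variables indexed by V:
   None = 0, Some (false, v) = + x_v, Some (true, v) = - x_v. *)
Definition entry (V : Type) := option (bool * V).

Definition ev (V : Type) (x : V -> int) (e : entry V) : int :=
  match e with
  | None => 0
  | Some (b, v) => if b then - x v else x v
  end.

Definition evmx (n : nat) (V : Type) (x : V -> int) (D : 'M[entry V]_n) : 'M[int]_n :=
  \matrix_(i, j) ev x (D i j).

(* D is an orthogonal design OD(n; (c v)_v): D D^T = (sum_v c_v x_v^2) I_n
   as a polynomial identity in the commuting indeterminates x_v, expressed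
   as equality for every integer substitution (equivalent, as Z is infinite). *)
Definition is_OD (n : nat) (V : finType) (c : V -> int) (D : 'M[entry V]_n) : Prop :=
  forall x : V -> int,
    evmx x D *m (evmx x D)^T = (\sum_(v : V) c v * x v ^+ 2)%:M.

Definition hadamard_zero (n : nat) (V W : Type) (A : 'M[entry V]_n) (B : 'M[entry W]_n) : Prop :=
  forall i j, A i j = None \/ B i j = None.

(* Formal sum A + B of designs in disjoint sets of indeterminates
   (meaningful when the supports are disjoint). *)
Definition mx_join (n : nat) (V W : Type) (A : 'M[entry V]_n) (B : 'M[entry W]_n)
  : 'M[entry (V + W)]_n :=
  \matrix_(i, j)
    match A i j with
    | Some (b, v) => Some (b, inl v)
    | None => match B i j with
              | Some (b, w) => Some (b, inr w)
              | None => None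
              end
    end.

Definition type_join (V W : Type) (c : V -> int) (d : W -> int) (s : V + W) : int :=
  match s with inl v => c v | inr w => d w end.

Definition is_PD (n : nat) (V1 V2 V3 : finType)
  (a : V1 -> int) (b : V2 -> int) (u : V3 -> int)
  (M1 : 'M[entry V1]_n) (M2 : 'M[entry V2]_n) (N : 'M[entry V3]_n) : Prop :=
  is_OD a M1 /\ is_OD b M2 /\ is_OD u N /\
  hadamard_zero M1 N /\ hadamard_zero M2 N /\
  is_OD (type_join a u) (mx_join M1 N) /\ is_OD (type_join b u) (mx_join M2 N) /\
  (forall (x : V1 -> int) (y : V2 -> int),
      evmx x M1 *m (evmx y M2)^T = evmx y M2 *m (evmx x M1)^T).

(* Main.v *)
Require Import Defs.
From HB Require Import structures.
From mathcomp Require Import all_boot all_order all_algebra.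
From mathcomp Require Import zify ring.
Import Order.TTheory GRing.Theory Num.Theory.
Local Open Scope ring_scope.
Set Implicit Arguments. Unset Strict Implicit.

Definition pos n (P : 'M[int]_n) (x : 'I_n) : 'I_n := odflt x [pick y | P x y != 0].

Lemma sq_ge0 (z : int) : 0 <= z * z. Proof. nia. Qed.

Lemma perm_row n (P : 'M[int]_n) x : P *m P^T = 1%:M ->
  P x (pos P x) ^+ 2 = 1 /\ forall w, w != pos P x -> P x w = 0.
Proof.
move=> H; have Hs : \sum_j P x j * P x j = 1.
  have := congr1 (fun M : 'M[int]_n => M x x) H; rewrite !mxE eqxx mulr1n => <-.
  by apply: eq_bigr => j _; rewrite mxE.

rewrite /pos; case: pickP => [y Hy | H0] /=; last first.
  by move: Hs; rewrite big1 // => j _; move/negbT: (H0 j); rewrite negbK => /eqP ->; rewrite mul0r.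
move: Hs; rewrite (bigD1 y) //= => Hs.
have Hr : 0 <= \sum_(j | j != y) P x j * P x j by apply: sumr_ge0 => j _; exact: sq_ge0.
have Hy1 : 1 <= P x y * P x y by move: Hy; nia.
set S := (\sum_(j | _) _) in Hs Hr. have Hr0 : S = 0 by lia.
split; first by rewrite expr2; lia.
move=> w Hw; have := psumr_eq0P (fun j _ => sq_ge0 (P x j)) Hr0 Hw.
by move/eqP; rewrite mulf_eq0 orbb => /eqP.
Qed.

Lemma perm_nz n (P : 'M[int]_n) x : P *m P^T = 1%:M -> P x (pos P x) != 0.
Proof. by move=> H; have [h _] := perm_row x H; apply/eqP => h0; rewrite h0 expr0n in h. Qed.

Lemma perm_uniq n (P : 'M[int]_n) x w : P *m P^T = 1%:M -> P x w != 0 -> w = pos P x.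
Proof. move=> H Hw; apply/eqP; apply: contraNT Hw => Hne; apply/eqP; exact: (proj2 (perm_row x H)). Qed.

Lemma perm_sq n (P : 'M[int]_n) x : P *m P^T = 1%:M -> P x (pos P x) * P x (pos P x) = 1.
Proof. by move=> H; rewrite -expr2; exact: (proj1 (perm_row x H)). Qed.

Lemma mulT_permR n (X Y : 'M[int]_n) i j : Y *m Y^T = 1%:M ->
  (X *m Y^T) i j = X i (pos Y j) * Y j (pos Y j).
Proof.
move=> H; rewrite mxE (bigD1 (pos Y j)) //= big1 ?addr0; first by rewrite mxE.
by move=> w Hw; rewrite mxE (proj2 (perm_row j H) w Hw) mulr0.
Qed.

Lemma mulT_permL n (X Y : 'M[int]_n) i j : X *m X^T = 1%:M ->
  (X *m Y^T) i j = X i (pos X i) * Y j (pos X i).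
Proof.
move=> H; rewrite mxE (bigD1 (pos X i)) //= big1 ?addr0; first by rewrite mxE.
by move=> w Hw; rewrite mxE (proj2 (perm_row i H) w Hw) mul0r.
Qed.

Lemma entry_add n (X Y : 'M[int]_n) i j : (X + Y) i j = X i j + Y i j.
Proof. by rewrite mxE. Qed.


Lemma at_eq n (X Y : 'M[int]_n) i j : X = Y -> X i j = Y i j.
Proof. by move=> ->. Qed.

Lemma type12 n (a b c : 'M[int]_n) x z :
  a *m a^T = 1%:M -> b *m b^T = 1%:M ->
  (forall x y, a y x = - a x y) -> (forall x y, b y x = b x y) ->
  (forall x y, c y x = - c x y) ->
  a *m c^T + c *m a^T = 0 -> b *m c^T + c *m b^T = 0 ->
  pos b x = pos a x -> pos b z = pos a z ->
  c z (pos a x) != 0 -> c z x != 0 -> False.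
Proof.
move=> Ha Hb ask bsy csk Hac Hbc tx tz u0 u1.
have ssx : pos a (pos a x) = x by apply/esym/perm_uniq => //; rewrite ask oppr_eq0 perm_nz.
have tsx : pos b (pos a x) = x by apply/esym/perm_uniq => //; rewrite bsy -tx perm_nz.
have key : forall y, pos b y = pos a y -> c z (pos a y) != 0 ->
    b y (pos b y) = a y (pos a y) * a z (pos a z) * b z (pos b z).
  move=> y ty uy.
  have E1 := at_eq y z Hbc; rewrite entry_add mulT_permL // mulT_permR // mxE in E1.
  have E2 := at_eq y z Hac; rewrite entry_add mulT_permL // mulT_permR // mxE in E2.
  rewrite ty tz in E1; rewrite tz.
  have sz := perm_sq z Ha.
  move: E1 E2 uy sz.
  set u := c z (pos a y); set v := c y (pos a z); set ay := a y (pos a y); set az := a z (pos a z).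
  set by_ := b y (pos a y); set bz := b z (pos a z).
  move=> E1 E2 uy sz.
  rewrite ty.
  have e : v * az = - (ay * u) by apply/eqP; rewrite -addr_eq0 addrC E2.
  have hv : v = - ay * az * u by rewrite -[v]mulr1 -sz mulrA e; ring.
  rewrite hv in E1.
  have : u * (by_ - ay * az * bz) = 0 by rewrite -E1; ring.
  by move/eqP; rewrite mulf_eq0 (negbTE uy) /= subr_eq0 => /eqP.
have k1 := key x tx u0.
have k2 := key (pos a x); rewrite ssx tsx in k2; have {k2}k2 := k2 erefl u1.
rewrite ask bsy in k2.
have nb := perm_nz x Hb.
move: k1 k2 nb; rewrite tx.
set B := b x (pos a x); set A := a x (pos a x); set W := a z (pos a z) * b z (pos b z).
move=> k1 k2 nb.
have : B = 0 by move: k1 k2; rewrite -!mulrA -/W; lia.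
by move/eqP; rewrite (negbTE nb).
Qed.

Lemma type0 n (a b c : 'M[int]_n) x z :
  a *m a^T = 1%:M -> b *m b^T = 1%:M ->
  (forall x y, a y x = - a x y) -> (forall x y, b y x = b x y) ->
  (forall x y, c y x = - c x y) ->
  a *m b^T = b *m a^T -> b *m c^T + c *m b^T = 0 ->
  pos b x = x -> pos b z = z -> pos b (pos a x) = pos a x ->
  c x z != 0 -> c (pos a x) z != 0 -> False.
Proof.
move=> Ha Hb ask bsy csk Hab Hbc tx tz tsx u0 u1.
have key : forall y, pos b y = y -> c y z != 0 -> b y y = b z z.
  move=> y ty uy.
  have E1 := at_eq y z Hbc; rewrite entry_add mulT_permL // mulT_permR // mxE in E1.
  rewrite ty tz csk in E1.
  have : c y z * (b z z - b y y) = 0 by rewrite -[RHS]E1; ring.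
  by move/eqP; rewrite mulf_eq0 (negbTE uy) /= subr_eq0 => /eqP.
have k1 := key x tx u0.
have k2 := key (pos a x) tsx u1.
have E := at_eq x (pos a x) Hab; rewrite mulT_permL // mulT_permL // tx [a (pos a x) x]ask in E.
have nb := perm_nz x Hb; rewrite tx in nb.
have na := perm_nz x Ha.
have : a x (pos a x) * (b x x + b (pos a x) (pos a x)) = 0.
  by rewrite mulrDr E; ring.
rewrite k1 k2; move/eqP; rewrite mulf_eq0 (negbTE na) /= -mulr2n mulrn_eq0 /= -k1.
by rewrite (negbTE nb).
Qed.


Definition ktype n (s1 t : 'I_n -> 'I_n) x : nat :=
  if t x == x then 0 else if t x == s1 x then 1 else 2.

Lemma count_lemma n (s1 s2 t : 'I_n -> 'I_n) :
 (forall x, s1 (s1 x) = x) -> (forall x, s2 (s2 x) = x) ->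
 (forall x, s1 x != x) -> (forall x, s2 x != x) -> (forall x, s1 x != s2 x) ->
 (forall x, s1 (s2 x) = s2 (s1 x)) ->
 (forall x, t x = x \/ t x = s1 x \/ t x = s2 x) ->
 (forall x, t (s1 x) = s1 (t x)) -> (forall x, t (s2 x) = s2 (t x)) ->
 (forall x z, z != x -> z != s1 x -> z != s2 x -> z != s1 (s2 x) ->
    ~ (t x = x /\ t z = z) /\ ~ (t x = s1 x /\ t z = s1 z) /\ ~ (t x = s2 x /\ t z = s2 z)) ->
 n \in [:: 0; 4; 8; 12].
Proof.
move=> i1 i2 f1 f2 f12 c12 tS t1 t2 forb.
have inj1 a b : s1 a = s1 b -> a = b by move=> h; rewrite -(i1 a) h i1.
have inj2 a b : s2 a = s2 b -> a = b by move=> h; rewrite -(i2 a) h i2.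
have kE x : (ktype s1 t x = 0 <-> t x = x) /\ (ktype s1 t x = 1 <-> t x = s1 x)
           /\ (ktype s1 t x = 2 <-> t x = s2 x).
  rewrite /ktype; case: (tS x) => [->|[->|->]].
  - by rewrite eqxx; split; [|split] => //; split => // h; [move: (f1 x); rewrite -h eqxx | move: (f2 x); rewrite -h eqxx].
  - rewrite (negbTE (f1 x)) eqxx; split; [|split]; split => //.
    + by move=> h; move: (f1 x); rewrite h eqxx.
    + by move=> h; move: (f12 x); rewrite h eqxx.
  - rewrite (negbTE (f2 x)) eq_sym (negbTE (f12 x)); split; [|split]; split => //.
    + by move=> h; move: (f2 x); rewrite h eqxx.
    + by move=> h; move: (f12 x); rewrite h eqxx.
have kle x : (ktype s1 t x = 0 \/ ktype s1 t x = 1 \/ ktype s1 t x = 2)%N.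
  by rewrite /ktype; case: ifP => _; [left|right; case: ifP => _; [left|right]].
have k1 x : ktype s1 t (s1 x) = ktype s1 t x.
  have [[a0 b0] [[a1 b1] [a2 b2]]] := kE x.
  have [[c0 d0] [[c1 d1] [c2 d2]]] := kE (s1 x).
  case: (tS x) => [h|[h|h]].
  - by rewrite (b0 h) d0 // t1 h.
  - by rewrite (b1 h) d1 // t1 h i1.
  - by rewrite (b2 h) d2 // t1 h c12.
have k2 x : ktype s1 t (s2 x) = ktype s1 t x.
  have [[a0 b0] [[a1 b1] [a2 b2]]] := kE x.
  have [[c0 d0] [[c1 d1] [c2 d2]]] := kE (s2 x).
  case: (tS x) => [h|[h|h]].
  - by rewrite (b0 h) d0 // t2 h.
  - by rewrite (b1 h) d1 // t2 h c12.
  - by rewrite (b2 h) d2 // t2 h i2.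
have fib x z : ktype s1 t z = ktype s1 t x ->
    z \in (x |: (s1 x |: (s2 x |: [set s1 (s2 x)]))).
  move=> hk; rewrite !inE; apply/negPn/negP; rewrite !negb_or => /and4P [h1 h2 h3 h4].
  have [F0 [F1 F2]] := forb x z h1 h2 h3 h4.
  have [[a0 b0] [[a1 b1] [a2 b2]]] := kE x.
  have [[c0 d0] [[c1 d1] [c2 d2]]] := kE z.
  case: (tS x) => [h|[h|h]].
  - by apply: F0; split => //; apply: c0; rewrite hk; exact: b0.
  - by apply: F1; split => //; apply: c1; rewrite hk; exact: b1.
  - by apply: F2; split => //; apply: c2; rewrite hk; exact: b2.
have cardO x : #|(x |: (s1 x |: (s2 x |: [set s1 (s2 x)])))| = 4.
  rewrite !cardsU1 cards1 !inE.
  have e1 : (x == s1 x) = false by rewrite eq_sym (negbTE (f1 x)).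
  have e2 : (x == s2 x) = false by rewrite eq_sym (negbTE (f2 x)).
  have e3 : (x == s1 (s2 x)) = false.
    by apply/negbTE/eqP => h; move: (f12 x); rewrite {1}h i1 eqxx.
  have e4 : (s1 x == s2 x) = false by rewrite (negbTE (f12 x)).
  have e5 : (s1 x == s1 (s2 x)) = false.
    by apply/negbTE/eqP => /inj1 h; move: (f2 x); rewrite -h eqxx.
  have e6 : (s2 x == s1 (s2 x)) = false by rewrite eq_sym (negbTE (f1 _)).
  by rewrite e1 e2 e3 e4 e5 e6.
have cK j : #|[pred z | ktype s1 t z == j]| \in [:: 0; 4].
  case: (pickP [pred z | ktype s1 t z == j]) => [x /= /eqP hx | none].
  - rewrite (@eq_card _ _ (x |: (s1 x |: (s2 x |: [set s1 (s2 x)])))) ?cardO // => z /=.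
    apply/eqP/idP => [hz|]; first by apply: fib; rewrite hz hx.
    rewrite !inE -hx => /or4P [] /eqP ->; rewrite ?k1 ?k2 ?k1 //.
  - by rewrite eq_card0.
have Hn := cardC [pred z | ktype s1 t z == 0].
rewrite card_ord -(cardID [pred z | ktype s1 t z == 1] [predC [pred z | ktype s1 t z == 0]]) in Hn.
rewrite (@eq_card _ [predI _ & _] [pred z | ktype s1 t z == 1]) in Hn; last first.
  by move=> z /=; rewrite !inE; case: (ktype s1 t z) => [|[|]].
rewrite (@eq_card _ [predD _ & _] [pred z | ktype s1 t z == 2]) in Hn; last first.
  by move=> z /=; rewrite !inE; case: (kle z) => [->|[->|->]].
rewrite -Hn.
move: (cK 0) (cK 1) (cK 2); rewrite !inE.
by move=> /orP [] /eqP -> /orP [] /eqP -> /orP [] /eqP ->.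
Qed.


Lemma skew_diag n (a : 'M[int]_n) x : (forall x y, a y x = - a x y) -> a x x = 0.
Proof. by move=> h; have := h x x; lia. Qed.

Lemma invol_neq n (s : 'I_n -> 'I_n) : (forall x, s (s x) = x) ->
  forall u v, (u != s v) = (s u != v).
Proof.
move=> i u v; apply/idP/idP; apply: contra => /eqP h; apply/eqP.
  by rewrite -h i.
by rewrite h i.
Qed.

Lemma two_prod (u v : int) : u != 0 -> v != 0 -> u * v + v * u != 0.
Proof. move=> hu hv; rewrite mulrC -mulr2n mulrn_eq0 /= mulf_eq0 negb_or hu hv //. Qed.

Lemma cnz n (a1 a2 c : 'M[int]_n) x y :
  c *m c^T = (n%:Z - 3)%:M -> (forall x y, `|c x y| <= 1) ->
  c x x = 0 -> c x (pos a1 x) = 0 -> c x (pos a2 x) = 0 ->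
  pos a1 x != x -> pos a2 x != x -> pos a1 x != pos a2 x ->
  y != x -> y != pos a1 x -> y != pos a2 x -> c x y != 0.
Proof.
move=> Hcc Hcb z0 z1 z2 d1 d2 d12 e0 e1 e2; apply/negP => /eqP z3.
have Hs : \sum_j c x j * c x j = n%:Z - 3.
  have := congr1 (fun M : 'M[int]_n => M x x) Hcc; rewrite !mxE eqxx mulr1n => <-.
  by apply: eq_bigr => j _; rewrite mxE.
pose T := x |: (pos a1 x |: (pos a2 x |: [set y])).
have cT : #|T| = 4%N.
  rewrite !cardsU1 cards1 !inE.
  rewrite eq_sym (negbTE d1) eq_sym (negbTE d2) eq_sym (negbTE e0).
  by rewrite (negbTE d12) eq_sym (negbTE e1) eq_sym (negbTE e2).
have Hle : \sum_j c x j * c x j <= \sum_j ((j \notin T)%:R : int).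
  apply: ler_sum => j _; case: (boolP (j \in T)) => hj /=.
    move: hj; rewrite !inE => /or4P [] /eqP ->; rewrite ?z0 ?z1 ?z2 ?z3 mulr0 //.
  by have := Hcb x j; nia.
have e : \sum_j ((j \notin T)%:R : int) = \sum_(j in ~: T) 1.
  by rewrite [RHS]big_mkcond; apply: eq_bigr => j _; rewrite in_setC; case: (j \in T).
rewrite e sumr_const Hs in Hle.
have := cardsC T; rewrite cT card_ord => hc.
move: Hle; lia.
Qed.

Lemma main_norm n (a1 a2 b c : 'M[int]_n) :
  a1 *m a1^T = 1%:M -> a2 *m a2^T = 1%:M -> b *m b^T = 1%:M ->
  (forall x y, a1 y x = - a1 x y) -> (forall x y, a2 y x = - a2 x y) ->
  (forall x y, b y x = b x y) -> (forall x y, c y x = - c x y) ->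
  a1 *m a2^T + a2 *m a1^T = 0 ->
  a1 *m b^T = b *m a1^T -> a2 *m b^T = b *m a2^T ->
  a1 *m c^T + c *m a1^T = 0 -> a2 *m c^T + c *m a2^T = 0 ->
  b *m c^T + c *m b^T = 0 ->
  c *m c^T = (n%:Z - 3)%:M ->
  (forall x y, `|c x y| <= 1) ->
  n \in [:: 0; 4; 8; 12]%N.
Proof.
move=> H1 H2 Hb a1s a2s bs cs H12 H1b H2b H1c H2c Hbc Hcc Hcb.
have i1 x : pos a1 (pos a1 x) = x.
  by apply/esym/perm_uniq => //; rewrite a1s oppr_eq0 perm_nz.
have i2 x : pos a2 (pos a2 x) = x.
  by apply/esym/perm_uniq => //; rewrite a2s oppr_eq0 perm_nz.
have it x : pos b (pos b x) = x.
  by apply/esym/perm_uniq => //; rewrite bs perm_nz.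
have f1 x : pos a1 x != x.
  by apply/eqP => h; have := perm_nz x H1; rewrite h skew_diag ?eqxx.
have f2 x : pos a2 x != x.
  by apply/eqP => h; have := perm_nz x H2; rewrite h skew_diag ?eqxx.
have f12 x : pos a1 x != pos a2 x.
  apply/eqP => h; have E := at_eq x x H12.
  rewrite entry_add mulT_permL // mulT_permL // mxE -h /= in E.
  have nz2 : a2 x (pos a1 x) != 0 by rewrite h perm_nz.
  by move: (two_prod (perm_nz x H1) nz2); rewrite E eqxx.
have c12 x : pos a1 (pos a2 x) = pos a2 (pos a1 x).
  pose w := pos a2 (pos a1 x).
  have E := at_eq x w H12.
  rewrite entry_add mulT_permL // mulT_permL // mxE /= in E.
  have nzw : a2 w (pos a1 x) != 0 by rewrite /w a2s oppr_eq0 perm_nz.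
  have nzl : a1 x (pos a1 x) * a2 w (pos a1 x) != 0 by rewrite mulf_neq0 // perm_nz.
  have nzr : a1 w (pos a2 x) != 0.
    by apply/negP => /eqP h; move: E; rewrite h mulr0 addr0 => E; rewrite E eqxx in nzl.
  have := perm_uniq H1 nzr; rewrite -/w => ->.
  by rewrite /w i1.
have cxx x : c x x = 0 by apply: skew_diag.
have cz1 x : c x (pos a1 x) = 0.
  have E := at_eq x x H1c; rewrite entry_add mulT_permL // mulT_permR // mxE /= in E.
  by apply/eqP/negPn/negP => h; move: (two_prod (perm_nz x H1) h); rewrite E eqxx.
have cz2 x : c x (pos a2 x) = 0.
  have E := at_eq x x H2c; rewrite entry_add mulT_permL // mulT_permR // mxE /= in E.
  by apply/eqP/negPn/negP => h; move: (two_prod (perm_nz x H2) h); rewrite E eqxx.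
have czt x : c x (pos b x) = 0.
  have E := at_eq x x Hbc; rewrite entry_add mulT_permL // mulT_permR // mxE /= in E.
  by apply/eqP/negPn/negP => h; move: (two_prod (perm_nz x Hb) h); rewrite E eqxx.
have cn x y : y != x -> y != pos a1 x -> y != pos a2 x -> c x y != 0.
  exact: (cnz Hcc Hcb (cxx x) (cz1 x) (cz2 x) (f1 x) (f2 x) (f12 x)).
have tS x : pos b x = x \/ pos b x = pos a1 x \/ pos b x = pos a2 x.
  case: (eqVneq (pos b x) x) => [->|h0]; first by left.
  case: (eqVneq (pos b x) (pos a1 x)) => [->|h1]; first by right; left.
  case: (eqVneq (pos b x) (pos a2 x)) => [->|h2]; first by right; right.
  by move: (cn x _ h0 h1 h2); rewrite czt eqxx.
have tcomm (a : 'M[int]_n) : a *m a^T = 1%:M -> a *m b^T = b *m a^T ->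
    (forall x, pos a (pos a x) = x) ->
    forall x, pos b (pos a x) = pos a (pos b x).
  move=> Ha Hab ia x; pose w := pos b (pos a x).
  have E := at_eq x w Hab; rewrite mulT_permL // mulT_permL // in E.
  have nzw : b w (pos a x) != 0 by rewrite /w bs perm_nz.
  have nzl : a x (pos a x) * b w (pos a x) != 0 by rewrite mulf_neq0 // perm_nz.
  move: nzl; rewrite E mulf_eq0 negb_or => /andP [_ nzr].
  by have := perm_uniq Ha nzr => ->; rewrite ia.
have t1 := tcomm a1 H1 H1b i1.
have t2 := tcomm a2 H2 H2b i2.
have n1 := invol_neq i1; have n2 := invol_neq i2.
apply: (count_lemma i1 i2 f1 f2 f12 c12 tS t1 t2).
move=> x z h1 h2 h3 h4.
have u1 : c z x != 0 by apply: cn; [rewrite eq_sym | rewrite n1 eq_sym | rewrite n2 eq_sym].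
split; [|split].
- case=> tx tz.
  apply: (type0 H1 Hb a1s bs cs H1b Hbc tx tz); first by rewrite t1 tx.
    by apply: cn.
  by apply: cn; rewrite ?i1 // -c12.
- case=> tx tz.
  apply: (type12 H1 Hb a1s bs cs H1c Hbc tx tz _ u1).
  by apply: cn; [rewrite eq_sym | rewrite n1 i1 eq_sym | rewrite n2 -c12 eq_sym].
- case=> tx tz.
  apply: (type12 H2 Hb a2s bs cs H2c Hbc tx tz _ u1).
  by apply: cn; [rewrite eq_sym | rewrite n1 eq_sym | rewrite n2 i2 eq_sym].
Qed.


Definition dlt (i : 'I_3) : 'I_3 -> int := fun v => (v == i)%:R.

Lemma evmxD n (V : Type) (x y : V -> int) (D : 'M[entry V]_n) :
  evmx (fun v => x v + y v) D = evmx x D + evmx y D.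
Proof.
apply/matrixP => i j; rewrite !mxE.
by case: (D i j) => [[[] v]|] /=; rewrite ?addr0 ?opprD.
Qed.

Lemma evmx_join n (V W : Type) (A : 'M[entry V]_n) (B : 'M[entry W]_n) (x : V + W -> int) :
  hadamard_zero A B ->
  evmx x (mx_join A B) = evmx (fun v => x (inl v)) A + evmx (fun w => x (inr w)) B.
Proof.
move=> H; apply/matrixP => i j; rewrite !mxE.
case: (H i j) => ->.
  by case: (B i j) => [[[] w]|] /=; rewrite ?add0r.
by case: (A i j) => [[[] v]|] /=; rewrite ?addr0.
Qed.

Lemma cross0 n (X Y : 'M[int]_n) (p q : int) :
  X *m X^T = p%:M -> Y *m Y^T = q%:M -> (X + Y) *m (X + Y)^T = (p + q)%:M ->
  X *m Y^T + Y *m X^T = 0.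
Proof.
move=> HX HY H; move: H; rewrite linearD /= !mulmxDl !mulmxDr HX HY raddfD /=.
rewrite -addrA [X in _ + X = _]addrC -!addrA => E.
have E2 : p%:M + q%:M + (X *m Y^T + Y *m X^T) = p%:M + q%:M + 0.
  rewrite addr0 -[RHS]E -!addrA; congr (_ + _).
  by rewrite addrCA [X in _ + X]addrC.
exact: (addrI _ E2).
Qed.

Lemma normE n (P X Y : 'M[int]_n) : P^T *m P = 1%:M ->
  (X *m P^T) *m (Y *m P^T)^T = X *m Y^T.
Proof. by move=> H; rewrite trmx_mul trmxK mulmxA -(mulmxA X) H mulmx1. Qed.

Lemma skew_from n (X Y : 'M[int]_n) : X *m Y^T + Y *m X^T = 0 ->
  forall i j, (X *m Y^T) j i = - (X *m Y^T) i j.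
Proof.
move=> H i j; have -> : (X *m Y^T) j i = (Y *m X^T) i j.
  have h : (X *m Y^T) j i = ((X *m Y^T)^T) i j by rewrite [RHS]mxE.
  by rewrite h trmx_mul trmxK.
move/eqP: H; rewrite addr_eq0 => /eqP ->. rewrite [Z in _ = - Z]mxE. rewrite opprK. reflexivity.
Qed.

Lemma sym_from n (X Y : 'M[int]_n) : X *m Y^T = Y *m X^T ->
  forall i j, (Y *m X^T) j i = (Y *m X^T) i j.
Proof.
move=> H i j.
have h : (Y *m X^T) i j = ((Y *m X^T)^T) j i by rewrite [RHS]mxE.
rewrite h trmx_mul trmxK H; reflexivity.
Qed.

Lemma abs_le1 (u v : int) : `|u| <= 1 -> v * v = 1 -> `|u * v| <= 1.
Proof. move=> hu hv; rewrite normrM; have -> : `|v| = 1 by nia. by rewrite mulr1. Qed.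


Lemma sum_dlt (i : 'I_3) : \sum_(v : 'I_3) dlt i v = 1.
Proof.
rewrite (bigD1 i) //= big1 ?addr0; first by rewrite /dlt eqxx.
by move=> v hv; rewrite /dlt (negbTE hv).
Qed.

Lemma od_dlt n (M : 'M[entry 'I_3]_n) i : is_OD (fun _ => 1) M ->
  evmx (dlt i) M *m (evmx (dlt i) M)^T = 1%:M.
Proof.
move/(_ (dlt i)) => ->; congr (_%:M); rewrite -[RHS](sum_dlt i).
by apply: eq_bigr => v _; rewrite /dlt mul1r; case: (v == i).
Qed.

Lemma od_cross n (M : 'M[entry 'I_3]_n) i j : i != j -> is_OD (fun _ => 1) M ->
  evmx (dlt i) M *m (evmx (dlt j) M)^T + evmx (dlt j) M *m (evmx (dlt i) M)^T = 0.
Proof.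
move=> hij H; apply: (cross0 (p := 1) (q := 1)); rewrite ?od_dlt //.
rewrite -evmxD H; congr (_%:M).
have -> : (1 + 1 : int) = \sum_(v : 'I_3) dlt i v + \sum_(v : 'I_3) dlt j v by rewrite !sum_dlt.
rewrite -big_split.
apply: eq_bigr => v _; rewrite /dlt mul1r.
case: (boolP (v == i)) => hvi; case: (boolP (v == j)) => hvj //.
by move: hij; rewrite -(eqP hvi) -(eqP hvj) eqxx.
Qed.

Lemma od_join n (M : 'M[entry 'I_3]_n) (N : 'M[entry 'I_1]_n) i :
  hadamard_zero M N -> is_OD (fun _ => 1) M -> is_OD (fun _ => n%:Z - 3) N ->
  is_OD (type_join (fun _ : 'I_3 => 1) (fun _ : 'I_1 => n%:Z - 3)) (mx_join M N) ->
  evmx (dlt i) M *m (evmx (fun _ => 1) N)^T + evmx (fun _ => 1) N *m (evmx (dlt i) M)^T = 0.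
Proof.
move=> hz HM HN HJ.
have hN : evmx (fun _ => 1) N *m (evmx (fun _ => 1) N)^T = (n%:Z - 3)%:M.
  by rewrite HN big_ord1 expr1n mulr1.
apply: (cross0 (p := 1) (q := n%:Z - 3)); rewrite ?od_dlt ?hN //.
have h := HJ (fun s => match s with inl v => dlt i v | inr _ => 1 end).
rewrite evmx_join // in h; rewrite h; congr (_%:M).
rewrite big_sumType /= big_ord1 expr1n mulr1; congr (_ + _).
rewrite -[RHS](sum_dlt i); apply: eq_bigr => v _; rewrite /dlt mul1r.
by case: (v == i).
Qed.

Unset Implicit Arguments.

Theorem theorem2p6 (n : nat) :
  (0 < n)%N -> n \notin [:: 4%N; 8%N; 12%N] ->
  ~ exists (M1 : 'M[entry 'I_3]_n) (M2 : 'M[entry 'I_3]_n) (N : 'M[entry 'I_1]_n),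
      is_PD (fun _ : 'I_3 => 1) (fun _ : 'I_3 => 1) (fun _ : 'I_1 => n%:Z - 3) M1 M2 N.
Proof.
move=> Hn Hnot [M1 [M2 [N [OD1 [OD2 [ODN [hz1 [hz2 [ODJ1 [ODJ2 Hcomm]]]]]]]]]].
pose i0 := @Ordinal 3 0 isT; pose i1 := @Ordinal 3 1 isT; pose i2 := @Ordinal 3 2 isT.
pose A i := evmx (dlt i) M1.
pose B := evmx (dlt i0) M2.
pose C := evmx (fun _ : 'I_1 => 1) N.
have hA i : A i *m (A i)^T = 1%:M by apply: od_dlt.
have hB : B *m B^T = 1%:M by apply: od_dlt.
have xA i j : i != j -> A i *m (A j)^T + A j *m (A i)^T = 0 by move=> h; apply: od_cross.
have cm i : A i *m B^T = B *m (A i)^T by apply: Hcomm.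
have jc i : A i *m C^T + C *m (A i)^T = 0 by apply: od_join.
have jb : B *m C^T + C *m B^T = 0 by apply: od_join.
have hC : C *m C^T = (n%:Z - 3)%:M by rewrite /C ODN big_ord1 expr1n mulr1.
have hCb x y : `|C x y| <= 1.
  by rewrite /C mxE; case: (N x y) => [[[] v]|] //=; rewrite ?normrN normr1.
have hP : (A i0)^T *m A i0 = 1%:M by apply: mulmx1C.
have := @main_norm n (A i1 *m (A i0)^T) (A i2 *m (A i0)^T) (B *m (A i0)^T) (C *m (A i0)^T).
rewrite !normE //.
move=> /(_ (hA i1) (hA i2) hB).
move=> /(_ (skew_from (xA i1 i0 isT)) (skew_from (xA i2 i0 isT))).
move=> /(_ (sym_from (cm i0))).
have csk : C *m (A i0)^T + A i0 *m C^T = 0 by rewrite addrC; apply: jc.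
move=> /(_ (skew_from csk)).
move=> /(_ (xA i1 i2 isT) (cm i1) (cm i2) (jc i1) (jc i2) jb hC).
have bnd : forall x y, `|(C *m (A i0)^T) x y| <= 1.
  by move=> x y; rewrite mulT_permR //; apply: abs_le1 => //; apply: perm_sq.
move=> /(_ bnd) Hm.
move: Hm Hnot Hn; rewrite !inE => /or4P [] /eqP -> //.
Qed.
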